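(* Let $q$ be a prime power and $k\ge3$, $u\ge2$, $h\ge1$ integers. Let $U_1,\dots,U_h$ be $u$-dimensional subspaces of $\mathbf F_q^k$ with $U_i\cap U_j=\{0\}$ for $i\ne j$, and assume $q^k-q^{k-1}>h(q^u-1)$. Let $U$ be the set of nonzero vectors of $\mathbf F_q^k$ not in $U_1\cup\dots\cup U_h$, let $\widetilde G$ be a matrix whose columns consist of exactly one representative of each class $\{\lambda\mathbf v:\lambda\in\mathbf F_q^*\}$, $\mathbf v\in U$, and let $\mathbf C$ be the linear code with generator matrix $\widetilde G$. Suppose $\mathbf C$ has parameters $\big[\frac{(q^k-1)-h(q^u-1)}{q-1},k,d=q^{k-1}-hq^{u-1}\big]_q$. If $i_h+u>\sum_{i=1}^{k-u}\lfloor h/q^i\rfloor$, then $\mathbf C$ is distance optimal.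
   Context: For a positive integer $h$ with $q$-adic expansion $h=h_{m-1}q^{m-1}+\dots+h_0$ ($0\le h_i<q$), $i_h$ denotes the least index $i\ge0$ with $h_i>0$. A linear $[n,k,d]_q$ code is distance optimal if no linear $[n,k,d+1]_q$ code exists. *)

(* Defs.v *)
From HB Require Import structures.
From mathcomp Require Import all_boot all_order all_algebra.
Set Implicit Arguments. Unset Strict Implicit. Unset Printing Implicit Defensive.
Import GRing.Theory.
Local Open Scope ring_scope.

Definition wt (F : fieldType) (n : nat) (v : 'rV[F]_n) : nat :=
  #|[set j : 'I_n | v ord0 j != 0]|.

Definition has_min_dist (F : fieldType) (n : nat) (C : {vspace 'rV[F]_n}) (d : nat) : Prop :=
  (exists c : 'rV[F]_n, [/\ c \in C, c != 0 & wt c = d]) /\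
  (forall c : 'rV[F]_n, c \in C -> c != 0 -> (d <= wt c)%N).

Definition is_code_nkd (F : fieldType) (n : nat) (C : {vspace 'rV[F]_n}) (k d : nat) : Prop :=
  \dim C = k /\ has_min_dist C d.

Definition distance_optimal (F : fieldType) (n k d : nat) : Prop :=
  ~ exists C : {vspace 'rV[F]_n}, is_code_nkd C k d.+1.

Definition gen_code (F : fieldType) (k n : nat) (G : 'M[F]_(k, n)) : {vspace 'rV[F]_n} :=
  <<[seq row i G | i <- enum 'I_k]>>%VS.

(* Main.v *)
Require Import Defs.
From HB Require Import structures.
From mathcomp Require Import all_boot all_order all_algebra.
From mathcomp Require Import zify.
Import GRing.Theory.
Local Open Scope ring_scope.

Definition cdiv (d m : nat) : nat := ((d + m.-1) %/ m)%N.
Definition gs (q k d : nat) : nat := (\sum_(i < k) cdiv d (q ^ i))%N.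

Lemma cdivA q m d : (0 < q)%N -> (0 < m)%N -> cdiv (cdiv d q) m = cdiv d (q * m).
Proof.
move=> q0 m0; rewrite /cdiv divnMA.
have -> : ((d + q.-1) %/ q + m.-1 = (m.-1 * q + (d + q.-1)) %/ q)%N by rewrite divnMDl // addnC.
congr (_ %/ _ %/ _)%N; rewrite mulnC; nia.
Qed.

Lemma gsS q k d : (0 < q)%N -> gs q k.+1 d = (d + gs q k (cdiv d q))%N.
Proof.
move=> q0; rewrite /gs big_ord_recl expn0.
have -> : cdiv d 1 = d by rewrite /cdiv addn0 divn1.
congr (_ + _)%N; apply: eq_bigr => i _.
by rewrite /bump /= ?add1n expnS cdivA ?expn_gt0 ?q0.
Qed.

Lemma gs_mono q k d d' : (d <= d')%N -> (gs q k d <= gs q k d')%N.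
Proof. by move=> h; apply: leq_sum => i _; apply: leq_div2r; rewrite leq_add2r. Qed.

Lemma pigeon (F : finType) (x0 : F) (I : finType) (S : {set I}) (r : I -> F) :
  exists a, (#|S| <= #|F| * #|[set j in S | r j == a]|)%N.
Proof.
have e : #|S| = (\sum_(a : F) #|[set j in S | r j == a]|)%N.
  rewrite -sum1_card (partition_big r predT) //=; apply: eq_bigr => a _.
  by rewrite -sum1_card; apply: eq_bigl => j; rewrite inE.
have [|a0 _ ha] := @eq_bigmax_cond F predT (fun a => #|[set j in S | r j == a]|).
  by apply/card_gt0P; exists x0.
exists a0; rewrite e -ha -sum_nat_const; apply: leq_sum => a _.
exact: (@leq_bigmax_cond F predT (fun a => #|[set j in S | r j == a]|)).
Qed.

Section Gr.
Variables (F : finFieldType) (n : nat).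

Lemma griesmer k : forall (T : {set 'I_n}) (C : {vspace 'rV[F]_n}) d,
  (k <= \dim C)%N -> (forall x, x \in C -> forall j, j \notin T -> x 0 j = 0) ->
  (forall x, x \in C -> x != 0 -> (d <= wt x)%N) -> (gs #|F| k d <= #|T|)%N.
Proof.
have q0 : (0 < #|F|)%N by apply/card_gt0P; exists 0.
have e0 : forall (v : 'rV[F]_n) j, v ord0 j = v 0 j by [].
elim: k => [|k IH] T C d hk hT hd; first by rewrite /gs big_ord0.
have hex : exists m, [exists c : 'rV[F]_n, [&& c \in C, c != 0 & wt c == m]].
  exists (wt (vpick C)); apply/existsP; exists (vpick C).
  rewrite memv_pick eqxx vpick0 andbT -dimv_eq0 -lt0n; exact: leq_trans hk.
case: (ex_minnP hex) => d0 /existsP [c /and3P [cC c0 /eqP wc]] hmin.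
have minw : forall y, y \in C -> y != 0 -> (d0 <= wt y)%N.
  by move=> y yC y0; apply: hmin; apply/existsP; exists y; rewrite yC y0 eqxx.
have dd0 : (d <= d0)%N by rewrite -wc; apply: hd.
apply: leq_trans (gs_mono _ _ _ _ dd0) _.
rewrite gsS //.
set S := [set j | c 0 j != 0].
have wS : wt c = #|S| by [].
have ST : S \subset T.
  apply/subsetP => j; rewrite inE; apply: contraR => jT; apply/eqP; exact: hT.
pose f : 'End('rV[F]_n) := linfun (@mulmxr F 1 n n (diag_mx (\row_j (if j \in S then 0 else 1 : F)))).
have fE : forall x j, f x 0 j = if j \in S then 0 else x 0 j.
  move=> x j; rewrite lfunE /= mul_mx_diag !mxE.
  by case: ifP => _; rewrite ?mulr0 ?mulr1.
have dT : (d0 <= #|T|)%N by rewrite -wc wS subset_leq_card.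
have hT' : #|T :\: S| = (#|T| - d0)%N by rewrite cardsD (setIidPr ST) -wc.
suff : (gs #|F| k (cdiv d0 #|F|) <= #|T :\: S|)%N.
  by rewrite hT' => h; rewrite -(subnKC dT) leq_add2l.
have [j0 cj0] : exists j0, c 0 j0 != 0.
  apply/existsP; apply: contraR c0 => /existsPn h; apply/eqP/rowP => j.
  by rewrite mxE; apply/eqP/negbNE/h.
have fc : f c = 0.
  apply/rowP => j; rewrite fE mxE; case: ifP => // /negbT.
  by rewrite inE negbK => /eqP.
apply: (IH _ (f @: C)%VS).
- have := limg_ker_dim f C.
  have kerS : (C :&: lker f <= <[c]>)%VS.
    apply/subvP => x /memv_capP [xC xk]; rewrite memv_ker in xk.
    have xS : forall j, j \notin S -> x 0 j = 0.
      move=> j jS; have := congr1 (fun v : 'rV[F]_n => v 0 j) (eqP xk).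
      by rewrite fE (negbTE jS) mxE.
    apply/vlineP; exists (x 0 j0 / c 0 j0).
    apply/eqP; rewrite -subr_eq0; apply/negPn/negP => y0.
    have := minw _ (memvB xC (memvZ _ cC)) y0.
    rewrite -wc wS (cardsD1 j0 S) inE cj0 add1n ltnNge => /negP; apply.
    apply: subset_leq_card; apply/subsetP => j; rewrite !inE !mxE.
    have [->|jj0] := eqVneq j j0; first by rewrite divfK // subrr eqxx.
    rewrite /=; apply: contraR => jS.
    move: jS; rewrite negbK => /eqP cj.
    rewrite xS ?inE ?cj ?eqxx //; by rewrite GRing.mulr0 sub0r oppr0.
  have := dimvS kerS; rewrite dim_vline c0 /=; move: hk.
  move: (\dim (C :&: lker f)) (\dim (f @: C)) (\dim C) => a b e; lia.
- move=> y /memv_imgP [x xC ->] j; rewrite fE inE negb_and negbK.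
  case/orP => [-> //|jT]; case: ifP => // _; exact: hT.
- move=> y /memv_imgP [x xC ->] y0.
  have [a ha] := @pigeon _ (0 : F) _ S (fun j => x 0 j / c 0 j).
  set A := [set j in S | _ == a] in ha.
  have AS : A \subset S by apply/subsetP => j; rewrite inE => /andP [].
  have zC : x - a *: c \in C by rewrite memvB // memvZ.
  have z0 : x - a *: c != 0.
    apply: contra y0 => /eqP z0; have := congr1 f z0.
    by rewrite linearB linearZ /= fc scaler0 subr0 linear0 => ->.
  have := minw _ zC z0 => hz.
  have hz2 : (wt (x - a *: c) <= wt (f x) + #|S :\: A|)%N.
    apply: leq_trans (leq_card_setU _ _); apply: subset_leq_card.
    apply/subsetP => j; rewrite !inE !mxE fE !e0.
    case: ifP => jS; last first.
      move: jS; rewrite inE => /negbFE/eqP cj.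
      by rewrite cj GRing.mulr0 subr0 => ->.
    move: (jS); rewrite inE => cS; rewrite cS eqxx /= andbT.
    by apply: contra => /eqP <-; rewrite divfK // subrr.
  have hA : #|S :\: A| = (#|S| - #|A|)%N by rewrite cardsD (setIidPr AS).
  have Ale : (#|A| <= #|S|)%N by apply: subset_leq_card.
  rewrite -wS wc in hA Ale ha.
  have A1 : (#|A| <= wt (f x))%N.
    move: hz hz2 hA Ale; move: (wt (x - a *: c)) (wt (f x)) #|S :\: A| #|A| => ??? ?; lia.
  apply: leq_trans A1; rewrite /cdiv -ltnS ltn_divLR //.
  move: ha q0; move: #|F| #|A| => Q a'; nia.
Qed.
End Gr.

Local Close Scope ring_scope.

Lemma term (m t H : nat) : 0 < m -> H < m * t ->
  cdiv (m * t - H).+1 m + H %/ m = t + (m %| H).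
Proof.
move=> m0 Hlt; rewrite /cdiv.
have eH := divn_eq H m.
have rm := ltn_pmod H m0.
have dH : H %/ m = H %/ m by [].
have [a ea] : exists a, H %/ m = a by eexists.
have [r er] : exists r, H %% m = r by eexists.
rewrite ea er in eH rm; clear ea er dH.
have at_ : a < t by move: Hlt; rewrite eH; nia.
have -> : H %/ m = a by rewrite eH divnMDl // divn_small // addn0.
have -> : (m %| H) = (r == 0) by rewrite /dvdn eH modnMDl modn_small.
case: eqP => [r0|/eqP r0].
  have -> : (m * t - H).+1 + m.-1 = (t - a).+1 * m by rewrite eH r0; nia.
  rewrite mulnK //; lia.
have -> : (m * t - H).+1 + m.-1 = (t - a) * m + (m - r) by rewrite eH; nia.
rewrite divnMDl // divn_small; lia.
Qed.

Lemma rev_sum q K : \sum_(i < K.+1) q ^ (K - i) = \sum_(i < K.+1) q ^ i.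
Proof.
rewrite -(big_mkord xpredT (fun i => q ^ (K - i))) -(big_mkord xpredT (fun i => q ^ i)).
rewrite [RHS]big_nat_rev; apply: eq_big_nat => i _; by rewrite add0n subSS.
Qed.

Lemma sum_terms q K H : 0 < q -> H < q ^ K ->
  gs q K.+1 (q ^ K - H).+1 + \sum_(i < K.+1) H %/ q ^ i =
  \sum_(i < K.+1) q ^ i + \sum_(i < K.+1) (q ^ i %| H).
Proof.
move=> q0 HK; rewrite -rev_sum /gs -!big_split; apply: eq_bigr => i _ /=.
have iK : i <= K by rewrite -ltnS.
have e : q ^ K = q ^ i * q ^ (K - i) by rewrite -expnD subnKC.
rewrite e term ?expn_gt0 ?q0 //; by rewrite -e.
Qed.

Lemma floor_sum q K U h : 0 < q -> U <= K ->
  \sum_(i < K.+1) (h * q ^ U) %/ q ^ i =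
  h * \sum_(i < U.+1) q ^ i + \sum_(1 <= i < (K - U).+1) h %/ q ^ i.
Proof.
move=> q0 UK.
rewrite -(big_mkord xpredT (fun i => h * q ^ U %/ q ^ i)) (big_cat_nat _ (n := U.+1)) //=.
congr (_ + _).
  rewrite -(rev_sum q U) big_distrr /= -(big_mkord xpredT (fun i => h * q ^ (U - i))).
  apply: eq_big_nat => i /andP [_ iU].
  have e : q ^ U = q ^ (U - i) * q ^ i by rewrite -expnD subnK.
  by rewrite e mulnA mulnK // expn_gt0 q0.
rewrite [in LHS](_ : U.+1 = 1 + U) // big_addn subSn //.
apply: eq_big_nat => i _; by rewrite expnD divnMr // expn_gt0 q0.
Qed.

Lemma count_lb q K U h ih : q ^ ih %| h -> U.+1 + ih <= K.+1 ->
  U.+1 + ih <= \sum_(i < K.+1) (q ^ i %| h * q ^ U).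
Proof.
move=> dh hle; rewrite -(big_mkord xpredT (fun i => (q ^ i %| h * q ^ U) : nat)).
rewrite (big_cat_nat _ (n := U.+1 + ih)) //=; apply: leq_trans (leq_addr _ _).
rewrite -{1}(subn0 (U.+1 + ih)) -[X in X <= _]muln1 -sum_nat_const_nat.
rewrite big_nat_cond [X in _ <= X]big_nat_cond; apply: leq_sum => i /andP [/andP [_ hi] _].
rewrite lt0b; apply: dvdn_trans (_ : q ^ (ih + U) %| _).
  by apply: dvdn_exp2l; lia.
by rewrite expnD dvdn_mul.
Qed.

Local Open Scope ring_scope.
Theorem theorem2p3 (F : finFieldType) (k u h ih n : nat)
  (Us : 'I_h -> {vspace 'rV[F]_k}) (G : 'M[F]_(k, n)) :
  (3 <= k)%N -> (2 <= u)%N -> (1 <= h)%N ->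
  (forall i, \dim (Us i) = u) ->
  (forall i j, i != j -> (Us i :&: Us j)%VS = 0%VS) ->
  (h * (#|F| ^ u - 1) < #|F| ^ k - #|F| ^ k.-1)%N ->
  n = ((#|F| ^ k - 1 - h * (#|F| ^ u - 1)) %/ (#|F| - 1))%N ->
  (* every column of G lies in U = F^k \ (U_1 u ... u U_h u {0}) *)
  (forall j : 'I_n, (col j G)^T != 0 /\ (forall i, (col j G)^T \notin Us i)) ->
  (* each projective class of U has exactly one representative among the columns *)
  (forall v : 'rV[F]_k, v != 0 -> (forall i, v \notin Us i) ->
     exists! j : 'I_n, exists2 a : F, a != 0 & (col j G)^T = a *: v) ->
  (* C has parameters [n, k, q^(k-1) - h q^(u-1)] *)
  is_code_nkd (gen_code G) k (#|F| ^ k.-1 - h * #|F| ^ u.-1)%N ->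
  (* i_h is the least index of a nonzero q-adic digit of h *)
  ((h %/ #|F| ^ ih) %% #|F| != 0)%N ->
  (forall i, (i < ih)%N -> ((h %/ #|F| ^ i) %% #|F| = 0)%N) ->
  (\sum_(1 <= i < (k - u).+1) h %/ #|F| ^ i < ih + u)%N ->
  distance_optimal F n k (#|F| ^ k.-1 - h * #|F| ^ u.-1)%N.
Proof.
move=> hk hu hh _ _ hlt hn _ _ _ dig dig0 hS [C [dimC [_ hmin]]].
have q2 : (1 < #|F|)%N.
  by apply/card_gt1P; exists 0, 1; rewrite !inE eq_sym oner_neq0.
have q0 : (0 < #|F|)%N by apply: ltnW.
clear Us G; move: hk hu hlt hn hS dimC hmin.
case: k => [|K] //; case: u => [|U] // hk hu hlt hn hS dimC hmin.
rewrite /= in hmin; rewrite subSS in hS.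
set q := #|F| in q2 q0 hlt hn hS hmin dig dig0.
have qU : (0 < q ^ U)%N by rewrite expn_gt0 q0.
have HK : (h * q ^ U < q ^ K)%N.
  move: hlt; rewrite /= !expnS; move: (q ^ U)%N (q ^ K)%N qU => Q R Q0 hlt.
  rewrite ltnNge; apply/negP => hle; move: hlt; rewrite ltnNge => /negP; apply.
  have e1 : (q * R - R = q.-1 * R)%N by rewrite -subn1 mulnBl mul1n.
  have e2 : (q.-1 * (h * Q) = h * (q * Q - Q))%N by rewrite -subn1 mulnCA mulnBl mul1n.
  rewrite e1; apply: leq_trans (_ : q.-1 * (h * Q) <= _)%N; first by rewrite leq_mul2l hle orbT.
  by rewrite e2 leq_mul2l leq_sub2l // orbT.
have dvh : forall i, (i <= ih)%N -> (q ^ i %| h)%N.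
  elim=> [|i IH] hi; first by rewrite expn0 dvd1n.
  have := dig0 i hi; move/eqP; rewrite -/(dvdn q _) => dq.
  rewrite expnS -(divnK (IH (ltnW hi))); exact: dvdn_mul.
have hge : (q ^ ih <= h)%N.
  have : (0 < h %/ q ^ ih)%N by rewrite lt0n; apply/negP => /eqP e; move: dig; rewrite e mod0n eqxx.
  by rewrite leq_divRL ?expn_gt0 ?q0 // mul1n.
have ihU : (U.+1 + ih <= K.+1)%N.
  have : (q ^ (ih + U) < q ^ K)%N.
    by rewrite expnD; apply: leq_ltn_trans HK; rewrite leq_mul2r hge orbT.
  rewrite ltn_exp2l //; lia.
have gr := @griesmer F n K.+1 setT C _ (eq_leq (esym dimC)) (fun _ _ _ h => ltac:(by rewrite inE in h)) hmin.
rewrite cardsT card_ord in gr.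
have st := sum_terms _ _ _ q0 HK.
rewrite (floor_sum _ _ _ _ q0 (_ : U <= K)%N) in st; last by lia.
have cl := count_lb _ _ _ _ _ (dvh ih (leqnn _)) ihU.
have hA := predn_exp q K.+1.
have hB := predn_exp q U.+1.
have hBA : (h * \sum_(i < U.+1) q ^ i <= \sum_(i < K.+1) q ^ i)%N.
  rewrite -(leq_pmul2l (_ : 0 < q.-1)%N); last by rewrite -subn1 subn_gt0.
  rewrite mulnCA -hA -hB -!subn1; apply: leq_trans (ltnW hlt) _.
  by rewrite /=; apply: leq_sub2l; rewrite expn_gt0 q0.
rewrite !subn1 hA hB mulnCA -mulnBr mulKn in hn; last by rewrite -subn1 subn_gt0.
rewrite -/q in gr.
move: gr st cl hS hn hBA.
move: (gs q K.+1 (q ^ K - h * q ^ U).+1) (\sum_(i < U.+1) q ^ i)%N (\sum_(1 <= i < (K - U).+1) h %/ q ^ i)%N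
  (\sum_(i < K.+1) q ^ i)%N (\sum_(i < K.+1) (q ^ i %| h * q ^ U))%N => g B S A cnt.
move: (h * B)%N => hB' h1 h2 h3 h4 h5 h6; subst n; clear -h1 h2 h3 h4 h6; lia.
Qed.
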